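(* Let $G$ be an $l$-group with left Haar measure $dg$, $V$ a smooth $G$-module and $n\ge1$. Define $T_n:C_c^\infty(G^{n+1},V)\to C_c^\infty(G^n,V)$ by $$(T_nf)(g_1,\dots,g_n)=\int_Gg^{-1}f(g,gg_1,gg_1g_2,\dots,gg_1\cdots g_n)\,dg.$$ Then $T_n$ is surjective and its kernel is spanned by the elements $g.f-f$, $g\in G$, $f\in C_c^\infty(G^{n+1},V)$, where $(g.f)(g_0,\dots,g_n)=g\,f(g^{-1}g_0,\dots,g^{-1}g_n)$.
   Context: An $l$-group: locally compact group, countable at infinity, with a basis of neighbourhoods of $e$ of compact open subgroups. Smooth module: every vector fixed by a compact open subgroup. $C_c^\infty(Y,V)$: locally constant compactly supported functions $Y\to V$. *)

(* Defs.v *)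
From HB Require Import structures.
From mathcomp Require Import all_boot all_order all_algebra.
From mathcomp Require Import all_classical all_reals all_analysis.
From mathcomp.real_closed Require Import complex.
Import Order.TTheory GRing.Theory Num.Theory.

Set Implicit Arguments.
Unset Strict Implicit.
Unset Printing Implicit Defensive.

Local Open Scope classical_set_scope.
Local Open Scope ring_scope.

Definition compact_open_subgroup (G : ptopologicalType)
  (mul : G -> G -> G) (inv : G -> G) (one : G) (K : set G) : Prop :=
  [/\ open K, compact K, K one & forall x y, K x -> K y -> K (mul x (inv y))].

Definition is_lgroup (G : ptopologicalType)
  (mul : G -> G -> G) (inv : G -> G) (one : G) : Prop :=
  [/\
      (forall x y z, mul x (mul y z) = mul (mul x y) z)
      /\ (forall x, mul one x = x) /\ (forall x, mul x one = x)
      /\ (forall x, mul (inv x) x = one) /\ (forall x, mul x (inv x) = one),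
      continuous (fun p : G * G => mul p.1 p.2) /\ continuous inv,
      hausdorff_space G /\ (forall x : G, exists C, compact C /\ nbhs x C),
      (exists C : nat -> set G, (forall k, compact (C k)) /\ \bigcup_k C k = setT)
    &
      (forall U, nbhs one U ->
         exists K, compact_open_subgroup mul inv one K /\ K `<=` U)].

Notation borel G := (g_sigma_algebraType (@open G)).

Definition is_left_haar (R : realType) (G : ptopologicalType)
  (mul : G -> G -> G) (mu : {measure set (borel G) -> \bar R}) : Prop :=
  [/\ (forall (g : G) (A : set (borel G)), measurable A ->
         mu [set mul g x | x in A] = mu A),
      (forall A : set G, compact A -> (mu A < +oo)%E),
      (forall U : set G, open U -> U !=set0 -> (0 < mu U)%E),
      (forall A : set (borel G), measurable A ->
         mu A = ereal_inf [set mu U | U in [set U : set G | open U /\ A `<=` U]])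
    & (forall U : set G, open U ->
         mu U = ereal_sup [set mu C | C in [set C : set G | compact C /\ C `<=` U]])].

Definition is_smooth_module (R : realType) (G : ptopologicalType)
  (mul : G -> G -> G) (inv : G -> G) (one : G)
  (V : lmodType R[i]) (act : G -> V -> V) : Prop :=
  [/\ (forall g (a : R[i]) (u v : V), act g (a *: u + v) = a *: act g u + act g v),
      (forall v, act one v = v),
      (forall g h v, act (mul g h) v = act g (act h v))
    & (forall v, exists K, compact_open_subgroup mul inv one K /\
                           forall k, K k -> act k v = v)].

Definition Cc_infty (Y : topologicalType) (V : zmodType) (f : Y -> V) : Prop :=
  (forall y, \forall z \near y, f z = f y) /\
  compact (closure [set y | f y != 0]).

Definition is_lc_integral (R : realType) (G : ptopologicalType)
  (mu : {measure set (borel G) -> \bar R}) (V : lmodType R[i])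
  (h : G -> V) (v : V) : Prop :=
  exists k (U : 'I_k -> set G) (c : 'I_k -> V),
    [/\ (forall j, compact (U j) /\ open (U j)),
        (forall j j', j != j' -> U j `&` U j' = set0),
        (forall j x, U j x -> h x = c j),
        (forall x, h x != 0 -> exists j, U j x)
      & v = \sum_(j < k) ((fine (mu (U j)))%:C)%C *: c j].

Definition lc_integral (R : realType) (G : ptopologicalType)
  (mu : {measure set (borel G) -> \bar R}) (V : lmodType R[i])
  (h : G -> V) : V :=
  xget 0 (is_lc_integral mu h).

(* the point (g, g g_1, g g_1 g_2, ..., g g_1 ... g_n) of G^{n+1} *)
Definition chain_point (G : Type) (mul : G -> G -> G) (n : nat)
  (g : G) (gs : 'I_n -> G) : 'I_n.+1 -> G :=
  fun i => foldl mul g (take i (map gs (enum 'I_n))).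

Definition Tn (R : realType) (G : ptopologicalType)
  (mul : G -> G -> G) (inv : G -> G)
  (mu : {measure set (borel G) -> \bar R}) (V : lmodType R[i])
  (act : G -> V -> V) (n : nat) (f : {ptws 'I_n.+1 -> G} -> V) : {ptws 'I_n -> G} -> V :=
  fun gs => lc_integral mu (fun g => act (inv g) (f (chain_point mul g gs))).

Definition fun_act (G : Type) (mul : G -> G -> G) (inv : G -> G)
  (V : Type) (act : G -> V -> V) (m : nat) (g : G) (f : ('I_m -> G) -> V) :
  ('I_m -> G) -> V :=
  fun x => act g (f (fun i => mul (inv g) (x i))).

(* Main.v *)
Require Import Defs.
From HB Require Import structures.
From mathcomp Require Import all_boot all_order all_algebra.
From mathcomp Require Import all_classical all_reals all_analysis.
From mathcomp.real_closed Require Import complex.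
Import Order.TTheory GRing.Theory Num.Theory.
Local Open Scope classical_set_scope.
Local Open Scope ring_scope.
Set Implicit Arguments.
Unset Strict Implicit.
Unset Printing Implicit Defensive.
From mathcomp Require Import zify.
From mathcomp Require finmap.

Lemma in_bigsetU_ord {T : Type} k (F : 'I_k -> set T) x :
  (\big[setU/set0]_(i < k) F i) x <-> exists i, F i x.
Proof.
elim: k F => [|k IH] F.
  by rewrite big_ord0; split => // -[[]].
rewrite big_ord_recr /=; split.
  case=> [/IH [i Fi]|Fx]; first by exists (widen_ord (leqnSn k) i).
  by exists ord_max.
case=> i Fi; have [ik|] := ltnP i k.
  left; apply/IH; exists (Ordinal ik).
  by have -> : widen_ord (leqnSn k) (Ordinal ik) = i by apply: val_inj.
move=> ki; have ik : nat_of_ord i = k by have := ltn_ord i; lia.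
by right; have <- : i = ord_max by apply: val_inj.
Qed.

Lemma cvg_ptws_of {I : eqType} {X : Type} {T : topologicalType} (F : set_system X) {FF : Filter F}
  (h : X -> {ptws I -> T}) (f : {ptws I -> T}) :
  (forall i, (fun x => h x i) @ F --> f i) -> h @ F --> f.
Proof.
move=> H.
apply/cvg_sup => i.
move=> A /=.
move=> [B [[U oU UB] Bf] BA].
apply: (filterS BA); rewrite -UB.
apply: (H i); apply: open_nbhs_nbhs; split => //.
by rewrite -UB in Bf.
Qed.

Lemma cont_ptws_of {I : eqType} {X T : topologicalType} (h : X -> {ptws I -> T}) :
  (forall i, continuous (fun x => h x i)) -> continuous h.
Proof. by move=> H x; apply: cvg_ptws_of => i; apply: H. Qed.

Lemma cont_proj {I : eqType} {T : topologicalType} (i : I) :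
  continuous (fun y : {ptws I -> T} => y i).
Proof. exact: (@proj_continuous I (fun _ => T) i). Qed.

Lemma hausdorff_ptws {I : eqType} {T : topologicalType} :
  hausdorff_space T -> hausdorff_space {ptws I -> T}.
Proof. by move=> hT; apply: (@hausdorff_product I (fun _ => T)). Qed.

Definition loc_const (Y : topologicalType) (W : Type) (f : Y -> W) :=
  forall y, \forall z \near y, f z = f y.

Lemma loc_const_comp (Y Z : topologicalType) (W : Type) (f : Z -> W) (phi : Y -> Z) :
  loc_const f -> continuous phi -> loc_const (f \o phi).
Proof. by move=> lf cphi y; exact: (cphi y _ (lf (phi y))). Qed.

Lemma loc_const_cst (Y : topologicalType) (W : Type) (w : W) :
  loc_const (fun _ : Y => w).
Proof. by move=> y; apply: nearW. Qed.

Section Grp.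
Variables (G : ptopologicalType) (mul : G -> G -> G) (inv : G -> G) (one : G).
Hypothesis HG : is_lgroup mul inv one.

Lemma mulA x y z : mul x (mul y z) = mul (mul x y) z.
Proof. by case: HG => -[]. Qed.
Lemma mul1g x : mul one x = x.
Proof. by case: HG => -[_ []]. Qed.
Lemma mulg1 x : mul x one = x.
Proof. by case: HG => -[_ [_ []]]. Qed.
Lemma mulVg x : mul (inv x) x = one.
Proof. by case: HG => -[_ [_ [_ []]]]. Qed.
Lemma mulgV x : mul x (inv x) = one.
Proof. by case: HG => -[_ [_ [_ []]]]. Qed.
Lemma mulKg x y : mul (inv x) (mul x y) = y.
Proof. by rewrite mulA mulVg mul1g. Qed.
Lemma mulKVg x y : mul x (mul (inv x) y) = y.
Proof. by rewrite mulA mulgV mul1g. Qed.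
Lemma mulgK x y : mul (mul y x) (inv x) = y.
Proof. by rewrite -mulA mulgV mulg1. Qed.
Lemma mulgKV x y : mul (mul y (inv x)) x = y.
Proof. by rewrite -mulA mulVg mulg1. Qed.
Lemma mul_inj x y z : mul x y = mul x z -> y = z.
Proof. by move=> e; rewrite -(mulKg x y) e mulKg. Qed.
Lemma invK x : inv (inv x) = x.
Proof. by apply: (@mul_inj (inv x)); rewrite mulVg mulgV. Qed.
Lemma invM x y : inv (mul x y) = mul (inv y) (inv x).
Proof.
apply: (@mul_inj (mul x y)); rewrite mulgV -mulA (mulA y) mulgV mul1g mulgV //.
Qed.
Lemma inv1 : inv one = one.
Proof. by rewrite -{2}(mulVg one) mulg1. Qed.

Lemma cont_mul : continuous (fun p : G * G => mul p.1 p.2).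
Proof. by case: HG => _ []. Qed.
Lemma cont_inv : continuous inv.
Proof. by case: HG => _ []. Qed.
Lemma hausG : hausdorff_space G.
Proof. by case: HG => _ _ []. Qed.
Lemma basisG U : nbhs one U ->
  exists K, compact_open_subgroup mul inv one K /\ K `<=` U.
Proof. by case: HG => _ _ _ _; apply. Qed.

Lemma cont_mul2 (X : topologicalType) (f g : X -> G) :
  continuous f -> continuous g -> continuous (fun x => mul (f x) (g x)).
Proof.
move=> cf cg x; apply: continuous2_cvg; last 2 first.
- exact: cf.
- exact: cg.
exact: (@cont_mul (f x, g x)).
Qed.

Lemma cont_inv2 (X : topologicalType) (f : X -> G) :
  continuous f -> continuous (fun x => inv (f x)).
Proof. by move=> cf x; apply: continuous_comp; [apply: cf|apply: cont_inv]. Qed.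

Lemma cont_id' (X : topologicalType) : continuous (fun x : X => x).
Proof. by move=> x. Qed.

Lemma cont_cst' (X Y : topologicalType) (c : Y) : continuous (fun _ : X => c).
Proof. by move=> x; apply: cvg_cst. Qed.

Section COS.
Variable K : set G.
Hypothesis HK : compact_open_subgroup mul inv one K.

Lemma K1 : K one. Proof. by case: HK. Qed.
Lemma Kopen : open K. Proof. by case: HK. Qed.
Lemma Kcompact : compact K. Proof. by case: HK. Qed.
Lemma KV x : K x -> K (inv x).
Proof. by case: HK => _ _ k1 kM Kx; rewrite -[inv x]mul1g; apply: kM. Qed.
Lemma KM x y : K x -> K y -> K (mul x y).
Proof. by case: HK => _ _ k1 kM Kx Ky; rewrite -[y]invK; apply: kM => //; apply: KV. Qed.
Lemma KMV x y : K x -> K y -> K (mul x (inv y)).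
Proof. by case: HK => _ _ _ kM; apply: kM. Qed.
Lemma Kclosed : closed K. Proof. exact: (compact_closed hausG Kcompact). Qed.
Lemma Knbhs : nbhs one K.
Proof. by apply: open_nbhs_nbhs; split; [apply: Kopen|apply: K1]. Qed.

Definition lcoset x := [set g | K (mul (inv x) g)].
Lemma lcoset_open x : open (lcoset x).
Proof.
apply: (@open_comp _ _ (fun g => mul (inv x) g) K) => [g _|]; last exact: Kopen.
by apply: cont_mul2; [apply: cont_cst'|apply: cont_id'].
Qed.
Lemma lcoset_closed x : closed (lcoset x).
Proof.
apply: (@closed_comp _ _ (fun g => mul (inv x) g) K) => [g _|]; last exact: Kclosed.
by apply: cont_mul2; [apply: cont_cst'|apply: cont_id'].
Qed.
Lemma lcosetE x : lcoset x = (mul x) @` K.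
Proof.
rewrite /lcoset; apply/seteqP; split => g /=.
  by move=> Kg; exists (mul (inv x) g) => //; rewrite mulKVg.
by case=> k Kk <-; rewrite mulKg.
Qed.
Lemma lcoset_compact x : compact (lcoset x).
Proof.
rewrite lcosetE; apply: continuous_compact; last exact: Kcompact.
apply: continuous_subspaceT => g.
by apply: cont_mul2; [apply: cont_cst'|apply: cont_id'].
Qed.
End COS.

End Grp.

Section Chain.
Variables (G : ptopologicalType) (mul : G -> G -> G) (inv : G -> G) (one : G).
Hypothesis HG : is_lgroup mul inv one.
Variable n : nat.

Definition cp (g : G) (gs : 'I_n -> G) (i : nat) :=
  foldl mul g (take i (map gs (enum 'I_n))).

Lemma cp0 g gs : cp g gs 0 = g.
Proof. by rewrite /cp take0. Qed.

Lemma cpS g gs i (hi : (i < n)%N) :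
  cp g gs i.+1 = mul (cp g gs i) (gs (Ordinal hi)).
Proof.
rewrite /cp (take_nth (gs (Ordinal hi))) ?size_map ?size_enum_ord //.
rewrite foldl_rcons (nth_map (Ordinal hi)) ?size_enum_ord //; congr mul; congr gs.
apply: val_inj; rewrite /= nth_enum_ord //.
by rewrite -enumT size_enum_ord.
Qed.

Lemma foldl_mulL a g l : foldl mul (mul a g) l = mul a (foldl mul g l).
Proof. by elim: l g => //= x l IH g; rewrite -(mulA HG) IH. Qed.

Lemma cpL a g gs i : cp (mul a g) gs i = mul a (cp g gs i).
Proof. exact: foldl_mulL. Qed.

Definition Dm (y : 'I_n.+1 -> G) : 'I_n -> G :=
  fun i => mul (inv (y (widen_ord (leqnSn n) i))) (y (lift ord0 i)).

Lemma D_chain g gs : Dm (chain_point mul g gs) = gs.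
Proof.
apply: funext => i; rewrite /Dm /chain_point.
have := cpS g gs (ltn_ord i); rewrite /cp => ->.
have -> : Ordinal (ltn_ord i) = i by apply/val_inj.
exact: (mulKg HG).
Qed.

Lemma chain_D (y : 'I_n.+1 -> G) : chain_point mul (y ord0) (Dm y) = y.
Proof.
apply: funext => -[k hk]; rewrite /chain_point /=.
elim: k hk => [|k IH] hk.
  by rewrite take0 /=; congr y; apply: val_inj.
have hk' : (k < n)%N by lia.
have := cpS (y ord0) (Dm y) hk'; rewrite /cp => ->.
rewrite (IH (ltnW hk)) /Dm.
have -> : widen_ord (leqnSn n) (Ordinal hk') = Ordinal (ltnW hk) by apply: val_inj.
rewrite (mulKVg HG); congr y; by apply/val_inj.
Qed.

Lemma chainL a g (gs : 'I_n -> G) :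
  chain_point mul (mul a g) gs = fun i => mul a (chain_point mul g gs i).
Proof. by apply: funext => i; exact: cpL. Qed.

Lemma D_L a y : Dm (fun i => mul a (y i)) = Dm y.
Proof.
by apply: funext => i; rewrite /Dm (invM HG) -(mulA HG) (mulKg HG).
Qed.

Lemma chain0 g (gs : 'I_n -> G) : chain_point mul g gs ord0 = g.
Proof. by rewrite /chain_point take0. Qed.

Lemma cont_chain : continuous (fun p : G * {ptws 'I_n -> G} =>
  (chain_point mul p.1 p.2 : {ptws 'I_n.+1 -> G})).
Proof.
apply: cont_ptws_of => -[k hk] /=; rewrite /chain_point /=.
elim: k hk => [|k IH] hk.
  have -> : (fun p : G * {ptws 'I_n -> G} => foldl mul p.1 (take 0 [seq p.2 i | i <- enum 'I_n]))
     = fst by apply: funext => p; rewrite take0.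
  by move=> p; apply: cvg_fst.
have hk' : (k < n)%N by lia.
have -> : (fun p : G * {ptws 'I_n -> G} => foldl mul p.1 (take k.+1 [seq p.2 i | i <- enum 'I_n]))
   = (fun p => mul (cp p.1 p.2 k) (p.2 (Ordinal hk'))).
  by apply: funext => p; rewrite -cpS.
apply: (cont_mul2 HG); first exact: (IH (ltnW hk)).
move=> p; apply: (@continuous_comp _ _ _ snd (fun y : {ptws 'I_n -> G} => y (Ordinal hk'))).
  exact: cvg_snd.
exact: cont_proj.
Qed.

Lemma cont_D : continuous (fun y : {ptws 'I_n.+1 -> G} => (Dm y : {ptws 'I_n -> G})).
Proof.
apply: cont_ptws_of => i; apply: (cont_mul2 HG); last exact: cont_proj.
by apply: (cont_inv2 HG); apply: cont_proj.
Qed.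

End Chain.

Lemma closure_sub_compact (Y : topologicalType) (A E : set Y) :
  hausdorff_space Y -> compact E -> A `<=` E -> compact (closure A).
Proof.
move=> hY cE AE; apply: (subclosed_compact (B := E)) => //; first exact: closed_closure.
by move=> t ct; apply: (compact_closed hY cE); apply: (closureS AE).
Qed.

Section Act.
Variables (R : realType) (G : ptopologicalType) (mul : G -> G -> G) (inv : G -> G) (one : G).
Hypothesis HG : is_lgroup mul inv one.
Variables (V : lmodType R[i]) (act : G -> V -> V).
Hypothesis HV : is_smooth_module mul inv one act.

Lemma act_lin g a u v : act g (a *: u + v) = a *: act g u + act g v.
Proof. by case: HV => h _ _ _; apply: h. Qed.
Lemma act1 v : act one v = v.
Proof. by case: HV => _ h _ _; apply: h. Qed.
Lemma actM g h v : act (mul g h) v = act g (act h v).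
Proof. by case: HV => _ _ e _; apply: e. Qed.
Lemma act_smooth v : exists K, compact_open_subgroup mul inv one K /\
                           forall k, K k -> act k v = v.
Proof. by case: HV => _ _ _ h; apply: h. Qed.

Lemma actD g u v : act g (u + v) = act g u + act g v.
Proof. by have := act_lin g 1 u v; rewrite !scale1r. Qed.
Lemma act0 g : act g 0 = 0.
Proof.
have h := actD g 0 0; rewrite addr0 in h.
by apply: (addrI (act g 0)); rewrite addr0 -h.
Qed.
Lemma actZ g a u : act g (a *: u) = a *: act g u.
Proof. by have := act_lin g a u 0; rewrite !addr0 act0 addr0. Qed.
Lemma actN g u : act g (- u) = - act g u.
Proof. by rewrite -scaleN1r actZ scaleN1r. Qed.
Lemma actB g u v : act g (u - v) = act g u - act g v.
Proof. by rewrite actD actN. Qed.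
Lemma act_sum g k (F : 'I_k -> V) : act g (\sum_(j < k) F j) = \sum_(j < k) act g (F j).
Proof. by apply: (big_morph (act g) (actD g) (act0 g)). Qed.
Lemma actKV g v : act (inv g) (act g v) = v.
Proof. by rewrite -actM (mulVg HG) act1. Qed.
Lemma actK g v : act g (act (inv g) v) = v.
Proof. by rewrite -actM (mulgV HG) act1. Qed.

Lemma near_coset (X : topologicalType) (a : X -> G) (K : set G) y :
  compact_open_subgroup mul inv one K -> continuous a ->
  \forall z \near y, K (mul (inv (a y)) (a z)).
Proof.
move=> HK ca.
have := (@cont_mul2 _ _ _ _ HG X (fun _ => inv (a y)) a (@cont_cst' X G (inv (a y))) ca) y.
rewrite /continuous_at (mulVg HG) => h; exact: (h K (Knbhs HK)).
Qed.

Lemma lc_act (X : topologicalType) (a : X -> G) (w : X -> V) :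
  continuous a -> loc_const w -> loc_const (fun x => act (a x) (w x)).
Proof.
move=> ca lw y; have [K [HK fixK]] := act_smooth (w y).
apply: filter_app (lw y); apply: filterS (near_coset y HK ca) => z Kz ->.
by rewrite -{1}(mulKVg HG (a y) (a z)) actM fixK.
Qed.

Variable n : nat.

Definition sec (K : set G) (w : {ptws 'I_n -> G} -> V) : {ptws 'I_n.+1 -> G} -> V :=
  fun y => if `[< K (y ord0) >] then act (y ord0) (w (Dm mul inv y)) else 0.

Lemma sec_Cc K w : compact_open_subgroup mul inv one K -> Cc_infty w -> Cc_infty (sec K w).
Proof.
move=> HK [lw cw]; split.
  move=> y; rewrite /sec; case: (pselect (K (y ord0))) => Ky.
    have nK : \forall z \near y, K (z ord0).
      apply: ((@cont_proj _ G ord0 y) K); apply: open_nbhs_nbhs; split => //; exact: (Kopen HK).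
    have lc := @lc_act _ (fun z : {ptws 'I_n.+1 -> G} => z ord0)
                 (fun z => w (Dm mul inv z)) (@cont_proj _ G ord0)
                 (loc_const_comp lw (cont_D (n:=n) HG)) y.
    apply: filter_app lc; apply: filterS nK => z Kz /= ->.
    by rewrite !asboolT.
  have nK : \forall z \near y, ~ K (z ord0).
    apply: ((@cont_proj _ G ord0 y) (~` K)); apply: open_nbhs_nbhs; split => //.
    apply: closed_openC; exact: (Kclosed HG HK).
  by apply: filterS nK => z Kz /=; rewrite !asboolF.
pose E := (fun p : G * {ptws 'I_n -> G} => (chain_point mul p.1 p.2 : {ptws 'I_n.+1 -> G}))
   @` (K `*` closure [set y | w y != 0]).
apply: (closure_sub_compact (E := E)).
- exact: hausdorff_ptws (hausG HG).
- apply: continuous_compact.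
    apply: continuous_subspaceT; exact: (cont_chain (n:=n) HG).
  apply: compact_setX => //; exact: (Kcompact HK).
move=> y /=; rewrite /sec; case: (pselect (K (y ord0))) => Ky; last first.
  by rewrite asboolF // eqxx.
rewrite asboolT // => hy.
exists (y ord0, Dm mul inv y); last exact: (chain_D HG).
split => //=; apply: subset_closure => /=.
by apply: contraNN hy => /eqP ->; rewrite act0.
Qed.

End Act.

Local Open Scope complex_scope.

Section Integ.
Variables (R : realType) (G : ptopologicalType) (mul : G -> G -> G) (inv : G -> G) (one : G).
Hypothesis HG : is_lgroup mul inv one.
Variable mu : {measure set (borel G) -> \bar R}.
Hypothesis Hmu : is_left_haar mul mu.
Variable V : lmodType R[i].

Lemma open_meas (U : set G) : open U -> measurable (U : set (borel G)).
Proof. by move=> oU; apply: sub_gen_smallest. Qed.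

Lemma compact_meas (U : set G) : compact U -> measurable (U : set (borel G)).
Proof.
move=> cU; rewrite -[U]setCK; apply: measurableC; apply: open_meas.
by apply: closed_openC; apply: (compact_closed (hausG HG) cU).
Qed.

Lemma mu_fin (U : set G) : compact U -> mu U \is a fin_num.
Proof.
move=> cU; rewrite ge0_fin_numE //; by case: Hmu => _ h _ _ _; apply: h.
Qed.

Lemma mu_fin_sub (U W : set G) : compact W -> measurable (U : set (borel G)) -> U `<=` W ->
  mu U \is a fin_num.
Proof.
move=> cW mU UW; rewrite ge0_fin_numE //; apply: (le_lt_trans (y := mu W)).
  by apply: le_measure => //; rewrite inE //; apply: compact_meas.
by rewrite -ge0_fin_numE //; apply: mu_fin.
Qed.


Lemma split_measure k (W : 'I_k -> set G) (U : set G) :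
  measurable (U : set (borel G)) -> (forall j, measurable (W j : set (borel G))) ->
  (forall j j', j != j' -> W j `&` W j' = set0) ->
  (forall x, U x -> exists j, W j x) ->
  mu U = \sum_(j < k) mu (U `&` W j).
Proof.
move=> mU mW dW cov.
have E : U = \big[setU/set0]_(j < k) (U `&` W j) :> set G.
  apply/seteqP; split => x.
    by move=> Ux; apply/in_bigsetU_ord; have [j Wj] := cov x Ux; exists j.
  by move/in_bigsetU_ord => [j []].
transitivity (mu (\big[setU/set0]_(j < k) (U `&` W j))); first by rewrite -E.
rewrite (measure_bigsetU_ord mu xpredT) //.
- by move=> j; apply: measurableI.
- move=> i j _ _ [x [[_ Wi] [_ Wj]]]; apply/eqP; apply: contraT => ij.
  have : (W i `&` W j) x by split.
  by rewrite (dW i j ij).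
Qed.


Lemma lc_expand (h : G -> V) k (U : 'I_k -> set G) (c : 'I_k -> V) k' (U' : 'I_k' -> set G) :
  (forall j, compact (U j) /\ open (U j)) -> (forall j x, U j x -> h x = c j) ->
  (forall j, compact (U' j) /\ open (U' j)) ->
  (forall j j', j != j' -> U' j `&` U' j' = set0) ->
  (forall x, h x != 0 -> exists j, U' j x) ->
  \sum_(j < k) (fine (mu (U j)))%:C *: c j =
  \sum_(j < k) \sum_(j' < k') (fine (mu (U j `&` U' j')))%:C *: c j.
Proof.
move=> hU hc hU' dU' cov'; apply: eq_bigr => j _.
have [->|cj0] := eqVneq (c j) 0.
  by rewrite scaler0 big1 // => j' _; rewrite scaler0.
rewrite -scaler_suml -rmorph_sum; congr (_%:C *: _).
rewrite (@split_measure k' U') //.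
- rewrite -sum_fine // => j' _.
  apply: (@mu_fin_sub _ (U j)); first by case: (hU j).
    apply: measurableI; apply: open_meas; [by case: (hU j)|by case: (hU' j')].
  exact: subIsetl.
- by apply: open_meas; case: (hU j).
- by move=> j'; apply: open_meas; case: (hU' j').
- by move=> x Ux; apply: cov'; rewrite (hc _ _ Ux).
Qed.

Lemma lc_unique (h : G -> V) v1 v2 :
  is_lc_integral mu h v1 -> is_lc_integral mu h v2 -> v1 = v2.
Proof.
move=> [k [U [c [hU dU hc cov ->]]]] [k' [U' [c' [hU' dU' hc' cov' ->]]]].
rewrite (lc_expand hU hc hU' dU' cov') (lc_expand hU' hc' hU dU cov) exchange_big /=.
apply: eq_bigr => j _; apply: eq_bigr => j' _.
rewrite [U' j `&` _]setIC.
case: (pselect (exists x, U j' x /\ U' j x)) => [[x [Ux U'x]]|nx].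
  by rewrite -(hc _ _ Ux) (hc' _ _ U'x).
have -> : U j' `&` U' j = set0.
  by apply/seteqP; split => x // [U'x Ux]; apply: nx; exists x.
by rewrite measure0 /= !rmorph0 !scale0r.
Qed.

Lemma lc_integralE (h : G -> V) v : is_lc_integral mu h v -> lc_integral mu h = v.
Proof.
move=> hv; apply: xget_unique => // y hy; exact: lc_unique hy hv.
Qed.


Lemma lc_translate (h : G -> V) v g :
  is_lc_integral mu h v -> is_lc_integral mu (fun x => h (mul (inv g) x)) v.
Proof.
move=> [k [U [c [hU dU hc cov ->]]]].
exists k, (fun j => [set mul g x | x in U j]), c; split.
- move=> j; have [cU oU] := hU j; split.
    apply: continuous_compact => //; apply: continuous_subspaceT.
    by apply: (cont_mul2 HG); [apply: cont_cst'|apply: cont_id'].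
  have -> : [set mul g x | x in U j] = (fun y => mul (inv g) y) @^-1` U j.
    apply/seteqP; split => y /=; first by case=> x Ux <-; rewrite (mulKg HG).
    by move=> Uy; exists (mul (inv g) y) => //; rewrite (mulKVg HG).
  apply: open_comp => // y _.
  by apply: (cont_mul2 HG); [apply: cont_cst'|apply: cont_id'].
- move=> j j' jj'; apply/seteqP; split => y // [[x Ux <-] [x' Ux' e]].
  have ex : x' = x by apply: (mul_inj HG e).
  have : (U j `&` U j') x by split => //; rewrite -ex.
  by rewrite (dU j j' jj').
- by move=> j y [x Ux <-]; rewrite (mulKg HG); apply: hc.
- move=> y /cov [j Uj]; exists j; exists (mul (inv g) y) => //.
  by rewrite (mulKVg HG).
- apply: eq_bigr => j _; congr ((fine _)%:C *: _).
  by case: Hmu => h1 _ _ _ _; rewrite h1 //; apply: open_meas; case: (hU j).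
Qed.

Lemma mu_lcoset (K : set G) x : compact_open_subgroup mul inv one K ->
  mu (lcoset mul inv K x) = mu K.
Proof.
move=> HK; rewrite (lcosetE HG).
by case: Hmu => h1 _ _ _ _; rewrite h1 //; apply: open_meas; apply: (Kopen HK).
Qed.

Lemma muK_pos (K : set G) : compact_open_subgroup mul inv one K ->
  fine (mu K) != 0.
Proof.
move=> HK; have hf := mu_fin (Kcompact HK).
have hp : (0 < mu K)%E.
  by case: Hmu => _ _ h3 _ _; apply: h3; [apply: (Kopen HK)|exists one; apply: (K1 HK)].
by rewrite gt_eqF // -lte_fin fineK.
Qed.


Definition gU (K : set G) k (x : 'I_k -> G) (b : 'I_k -> bool) j : set G :=
  if b j then lcoset mul inv K (x j) else set0.

Definition is_grid (K C : set G) k (x : 'I_k -> G) (b : 'I_k -> bool) :=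
  (forall j j', j != j' -> gU K x b j `&` gU K x b j' = set0) /\
  (forall y, C y -> exists j, gU K x b j y).

Lemma grid_exists (K C : set G) : compact_open_subgroup mul inv one K -> compact C ->
  exists k (x : 'I_k -> G) (b : 'I_k -> bool), is_grid K C x b.
Proof.
move=> HK cC.
have cov : C `<=` cover C (lcoset mul inv K).
  by move=> y Cy; exists y => //; rewrite /lcoset /= (mulVg HG); apply: (K1 HK).
have cC' := cC; rewrite compact_cover in cC'.
have [D' D'C cov'] := cC' G C (lcoset mul inv K) (fun x _ => lcoset_open HG HK x) cov.
pose s := finmap.enum_fset D'.
pose k := size s.
pose x (j : 'I_k) := nth one s j.
pose b (j : 'I_k) := `[< ~ (exists l : 'I_k, (l < j)%N /\ K (mul (inv (x l)) (x j))) >].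
exists k, x, b; split.
  have key : forall (j j' : 'I_k) y, (j' < j)%N -> gU K x b j y -> gU K x b j' y -> False.
    move=> j j' y jj'; rewrite /gU.
    case bj : (b j) => //; case: (b j') => // Ky Ky'.
    move: bj; rewrite /b asboolF //; apply; exists j'; split => //.
    have := KMV HK Ky' Ky.
    by rewrite (invM HG) (invK HG) -(mulA HG) (mulKVg HG).
  move=> j j' jj'; apply/seteqP; split => y // [U1 U2].
  by case: (ltngtP j j') => [h|h|/val_inj e]; [apply: (key j' j y)|apply: (key j j' y)|move: jj'; rewrite e eqxx].
move=> y Cy; have [x0 x0D Kx0] := cov' y Cy.
have x0s : x0 \in s by [].
have j0k : (index x0 s < k)%N by rewrite /k index_mem.
have : K (mul (inv (x (Ordinal j0k))) y) by rewrite /x /= nth_index.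
move: (Ordinal j0k); clear j0k.
suff : forall m (j : 'I_k), (j < m)%N -> K (mul (inv (x j)) y) -> exists j', gU K x b j' y.
  by move=> H j; apply: (H k) => //; apply: ltn_ord.
elim=> [//|m IH] j jm Kj.
case bj : (b j).
  by exists j; rewrite /gU bj.
have [l [lj Kl]] : exists l : 'I_k, (l < j)%N /\ K (mul (inv (x l)) (x j)).
  by apply: contrapT => nh; move: bj; rewrite /b asboolT.
apply: (IH l); first by apply: leq_trans lj _; rewrite -ltnS.
by have := KM HG HK Kl Kj; rewrite -(mulA HG) (mulKVg HG).
Qed.



Definition rinv (K : set G) (h : G -> V) := forall g kk, K kk -> h (mul g kk) = h g.

Lemma gU_co (K : set G) k (x : 'I_k -> G) b j : compact_open_subgroup mul inv one K ->
  compact (gU K x b j) /\ open (gU K x b j).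
Proof.
move=> HK; rewrite /gU; case: (b j); last by split; [apply: compact0|apply: open0].
by split; [apply: (lcoset_compact HG HK)|apply: (lcoset_open HG HK)].
Qed.

Lemma gU_const (K : set G) k (x : 'I_k -> G) b (h : G -> V) j y :
  rinv K h -> gU K x b j y -> h y = h (x j).
Proof.
rewrite /gU => hK; case: (b j) => // Ky.
by rewrite -(mulKVg HG (x j) y) hK.
Qed.

Lemma grid_integral (K C : set G) k (x : 'I_k -> G) b (h : G -> V) :
  compact_open_subgroup mul inv one K -> is_grid K C x b -> rinv K h ->
  (forall g, h g != 0 -> C g) ->
  is_lc_integral mu h (\sum_(j < k) (fine (mu (gU K x b j)))%:C *: h (x j)).
Proof.
move=> HK [dU cU] hK hC; exists k, (gU K x b), (fun j => h (x j)); split => //.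
- by move=> j; apply: gU_co.
- by move=> j y; apply: gU_const.
- by move=> y /hC /cU.
Qed.

Lemma grid_point (K C : set G) k (x : 'I_k -> G) b (h : G -> V) y :
  is_grid K C x b -> rinv K h -> (forall g, h g != 0 -> C g) ->
  h y = \sum_(j < k) (if `[< gU K x b j y >] then h (x j) else 0).
Proof.
move=> [dU cU] hK hC.
case: (pselect (exists j, gU K x b j y)) => [[j0 Uj0]|nU].
  rewrite (bigD1 j0) //= asboolT // big1 ?addr0; first exact: gU_const Uj0.
  move=> j jj0; rewrite asboolF // => Uj.
  have : (gU K x b j `&` gU K x b j0) y by [].
  by rewrite dU.
rewrite big1; last by move=> j _; rewrite asboolF // => Uj; apply: nU; exists j.
apply/eqP; apply: contraT => /hC /cU.
by move=> [j Uj]; exfalso; apply: nU; exists j.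
Qed.

Lemma gU_mass (K : set G) k (x : 'I_k -> G) b j : compact_open_subgroup mul inv one K ->
  fine (mu (gU K x b j)) = if b j then fine (mu K) else 0.
Proof.
by move=> HK; rewrite /gU; case: (b j) => //; [rewrite mu_lcoset|rewrite measure0].
Qed.

End Integ.

HB.instance Definition _ (T U : ptopologicalType) := Pointed.on (T * U)%type.
HB.instance Definition _ (I : Type) (T : ptopologicalType) := Pointed.on {ptws I -> T}.

Section RI.
Import finmap.
Variables (G : ptopologicalType) (mul : G -> G -> G) (inv : G -> G) (one : G).
Hypothesis HG : is_lgroup mul inv one.

Lemma RI_generic (Y : ptopologicalType) (W : Type) (F : G * Y -> W) (w0 : W) (S : set (G * Y)) :
  loc_const F -> compact S -> (forall p, F p <> w0 -> S p) ->
  exists K, compact_open_subgroup mul inv one K /\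
    forall g y kk, K kk -> F (mul g kk, y) = F (g, y).
Proof.
move=> lF cS hS.
have hp : forall p : G * Y, exists KO : set G * set (G * Y),
    [/\ compact_open_subgroup mul inv one KO.1, open KO.2, KO.2 p,
        (forall q, KO.2 q -> F q = F p) &
        (forall q kk, KO.2 q -> KO.1 kk -> KO.2 (mul q.1 kk, q.2))].
  move=> p; move: (lF p) => -[[P1 P2] /= [nP1 nP2] sub].
  have nK : nbhs one ((fun kk => mul p.1 kk) @^-1` P1).
    have := (@cont_mul2 _ _ _ _ HG G (fun _ => p.1) (fun kk => kk)
               (@cont_cst' G G p.1) (@cont_id' G)) one.
    rewrite /continuous_at (mulg1 HG) => h; exact: (h P1 nP1).
  have [Kp [HKp Ksub]] := basisG HG nK.
  exists (Kp, [set q | Kp (mul (inv p.1) q.1) /\ P2° q.2]); split => //=.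
  - rewrite openE => q [Kq Pq]; exists (lcoset mul inv Kp p.1, P2°) => /=.
      split; apply: open_nbhs_nbhs; split => //.
        exact: (lcoset_open HG HKp).
      exact: open_interior.
    by move=> [a b] /= [].
  - split; first by rewrite (mulVg HG); apply: (K1 HKp).
    exact: nP2.
  - move=> [q1 q2] /= [Kq Pq]; apply: (sub (q1, q2)); split => /=.
      by rewrite -(mulKVg HG p.1 q1); apply: Ksub.
    exact: nbhs_singleton.
  - move=> q kk [Kq Pq] Kk; split => //=.
    by rewrite (mulA HG); apply: (KM HG HKp).
have [KO hKO] := choice hp.
have cov : S `<=` cover S (fun p => (KO p).2).
  by move=> p Sp; exists p => //; case: (hKO p).
have cS' := cS; rewrite (compact_cover (G * Y)%type) in cS'.
have [D' D'S cov'] := cS' _ S (fun p => (KO p).2) (fun p _ => let: And5 _ o _ _ _ := hKO p in o) cov.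
have nI : nbhs one (\bigcap_(i in [set` D']) (KO i).1).
  apply: filter_bigI => p _; case: (hKO p) => HK _ _ _ _; exact: Knbhs HK.
have [K [HK KI]] := basisG HG nI.
exists K; split => // g y kk Kk.
case: (pselect (F (g, y) = w0)) => [e1|n1]; last first.
  have [p Dp Op] := cov' _ (hS _ n1).
  have [HKp _ _ cst cl] := hKO p.
  have Kpk : (KO p).1 kk by apply: (KI kk Kk).
  by rewrite (cst _ Op) (cst _ (cl _ _ Op Kpk)).
case: (pselect (F (mul g kk, y) = w0)) => [e2|n2]; first by rewrite e1 e2.
have [p Dp Op] := cov' _ (hS _ n2).
have [HKp _ _ cst cl] := hKO p.
have Kpk : (KO p).1 (inv kk) by apply: (KV HG HKp); apply: (KI kk Kk).
have := cl _ _ Op Kpk; rewrite /= (mulgK HG) => Op'.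
by rewrite (cst _ Op) (cst _ Op').
Qed.

End RI.

Local Open Scope complex_scope.

Section Main.
Variables (R : realType) (G : ptopologicalType) (mul : G -> G -> G) (inv : G -> G) (one : G).
Hypothesis HG : is_lgroup mul inv one.
Variable mu : {measure set (borel G) -> \bar R}.
Hypothesis Hmu : is_left_haar mul mu.
Variables (V : lmodType R[i]) (act : G -> V -> V).
Hypothesis HV : is_smooth_module mul inv one act.
Variable n : nat.


Definition Phi (f : {ptws 'I_n.+1 -> G} -> V) (p : G * {ptws 'I_n -> G}) : V :=
  act (inv p.1) (f (chain_point mul p.1 p.2)).

Lemma cont_pairing (X Y Z : topologicalType) (a : X -> Y) (b : X -> Z) :
  continuous a -> continuous b -> continuous (fun x => (a x, b x)).
Proof. by move=> ca cb x; apply: cvg_pair; [apply: ca|apply: cb]. Qed.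

Lemma cont_fst (Y Z : topologicalType) : continuous (fun p : Y * Z => p.1).
Proof. by move=> p; apply: cvg_fst. Qed.

Lemma Phi_lc f : Cc_infty f -> loc_const (Phi f).
Proof.
move=> [lf _]; apply: (lc_act HG HV (a := fun p : G * {ptws 'I_n -> G} => inv p.1)
   (w := fun p => f (chain_point mul p.1 p.2))).
  by apply: (cont_inv2 HG); apply: cont_fst.
exact: (loc_const_comp lf (cont_chain (n:=n) HG)).
Qed.

Lemma Phi_nz f p : Phi f p != 0 -> f (chain_point mul p.1 p.2) != 0.
Proof. by apply: contraNN => /eqP e; rewrite /Phi e (act0 HV). Qed.

Lemma Phi_good f : Cc_infty f -> exists K C, [/\ compact_open_subgroup mul inv one K,
  compact C, (forall gs, rinv mul K (fun g => Phi f (g, gs))) &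
  (forall gs g, Phi f (g, gs) != 0 -> C g)].
Proof.
move=> hf; have [lf cf] := hf.
pose S := (fun y : {ptws 'I_n.+1 -> G} => (y ord0, (Dm mul inv y : {ptws 'I_n -> G})))
   @` closure [set y | f y != 0].
have cS : compact S.
  apply: continuous_compact => //; apply: continuous_subspaceT.
  apply: cont_pairing; first exact: cont_proj.
  exact: (cont_D (n:=n) HG).
have hS : forall p, Phi f p <> 0 -> S p.
  move=> p /eqP /Phi_nz hp; exists (chain_point mul p.1 p.2).
    exact: subset_closure.
  by rewrite chain0 (D_chain HG); case: p {hp}.
have [K [HK RK]] := RI_generic HG (Phi_lc hf) cS hS.
exists K, ((fun y : {ptws 'I_n.+1 -> G} => y ord0) @` closure [set y | f y != 0]); split => //.
- apply: continuous_compact => //; apply: continuous_subspaceT; exact: cont_proj.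
- by move=> gs g kk Kk; apply: RK.
- move=> gs g /Phi_nz /= hp; exists (chain_point mul g gs).
    exact: subset_closure.
  by rewrite chain0.
Qed.



Notation m K x b j := ((fine (mu (gU mul inv K x b j)))%:C).

Lemma Tn_grid f : Cc_infty f -> exists K C k (x : 'I_k -> G) b,
  [/\ compact_open_subgroup mul inv one K, is_grid mul inv K C x b,
      (forall gs, rinv mul K (fun g => Phi f (g, gs))),
      (forall gs g, Phi f (g, gs) != 0 -> C g) &
      forall gs, Tn mul inv mu act f gs = \sum_(j < k) m K x b j *: Phi f (x j, gs)].
Proof.
move=> hf; have [K [C [HK cC RK SC]]] := Phi_good hf.
have [k [x [b hgrid]]] := grid_exists HG HK cC.
exists K, C, k, x, b; split => // gs.
apply: (lc_integralE HG Hmu).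
exact: (grid_integral HG mu HK hgrid (RK gs) (SC gs)).
Qed.

Lemma Phi_x_lc f g : Cc_infty f -> loc_const (fun gs : {ptws 'I_n -> G} => Phi f (g, gs)).
Proof.
move=> hf; apply: (loc_const_comp (f := Phi f) (phi := fun gs : {ptws 'I_n -> G} => (g, gs))).
  exact: Phi_lc.
by apply: cont_pairing; [apply: cont_cst'|apply: cont_id'].
Qed.

Lemma part1 (f : {ptws 'I_n.+1 -> G} -> V) : Cc_infty f -> Cc_infty (Tn mul inv mu act f).
Proof.
move=> hf; have [K [C [k [x [b [HK hgrid RK SC TE]]]]]] := Tn_grid hf.
split.
  move=> gs; have H := @filter_forall _ 'I_k
     (fun j gs' => Phi f (x j, gs') = Phi f (x j, gs)) (nbhs gs) (nbhs_filter gs)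
     (fun j => Phi_x_lc (x j) hf gs).
  apply: filterS H => gs' hgs'; rewrite !TE; apply: eq_bigr => j _; by rewrite hgs'.
have [lf cf] := hf.
apply: (closure_sub_compact (E := (fun y : {ptws 'I_n.+1 -> G} => (Dm mul inv y : {ptws 'I_n -> G}))
   @` closure [set y | f y != 0])).
- exact: hausdorff_ptws (hausG HG).
- apply: continuous_compact => //; apply: continuous_subspaceT; exact: (cont_D (n:=n) HG).
move=> gs /=; rewrite TE => hs.
have [j hj] : exists j, Phi f (x j, gs) != 0.
  apply: contrapT => nj; move: hs; rewrite big1 ?eqxx // => j _.
  have -> : Phi f (x j, gs) = 0 by apply/eqP; apply: contraT => hj; exfalso; apply: nj; exists j.
  by rewrite scaler0.
exists (chain_point mul (x j) gs); last exact: (D_chain HG).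
by apply: subset_closure; apply: (Phi_nz hj).
Qed.


Lemma Phi_sec K w g gs : compact_open_subgroup mul inv one K ->
  Phi (sec mul inv act K w) (g, gs) = if `[< K g >] then w gs else 0.
Proof.
move=> HK; rewrite /Phi /sec /= chain0 (D_chain HG).
by case: ifP => _; [rewrite (actKV HG HV)|rewrite (act0 HV)].
Qed.

Lemma part2 (h : {ptws 'I_n -> G} -> V) : Cc_infty h ->
  exists f : {ptws 'I_n.+1 -> G} -> V, Cc_infty f /\ Tn mul inv mu act f = h.
Proof.
move=> [lh ch].
have [K [HK _]] := basisG HG (@filterT _ (nbhs one) _).
pose w := fun gs => ((fine (mu K))^-1)%:C *: h gs.
have hw : Cc_infty w.
  split.
    by move=> y; apply: filterS (lh y) => z /= e; rewrite /w e.
  apply: (closure_sub_compact (E := closure [set y | h y != 0])) => //.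
    exact: hausdorff_ptws (hausG HG).
  move=> y /=; rewrite /w => hy; apply: subset_closure => /=.
  by apply: contraNN hy => /eqP ->; rewrite scaler0.
exists (sec mul inv act K w); split; first exact: (sec_Cc HG HV HK hw).
apply: funext => gs; apply: (lc_integralE HG Hmu).
exists 1, (fun _ => K), (fun _ => w gs); split.
- by move=> _; split; [apply: (Kcompact HK)|apply: (Kopen HK)].
- by move=> j j'; rewrite !ord1 eqxx.
- move=> _ g Kg; have := @Phi_sec K w g gs HK; rewrite /Phi /= => ->.
  by rewrite asboolT.
- move=> g; have := @Phi_sec K w g gs HK; rewrite /Phi /= => ->.
  case: (pselect (K g)) => Kg.
    by exists ord0.
  by rewrite asboolF // eqxx.
- rewrite big_ord1 /w scalerA -rmorphM mulfV ?rmorph1 ?scale1r //.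
  exact: (muK_pos Hmu HK).
Qed.


Lemma Phi_x_supp f g : Cc_infty f ->
  compact (closure [set gs : {ptws 'I_n -> G} | Phi f (g, gs) != 0]).
Proof.
move=> [lf cf].
apply: (closure_sub_compact (E := (fun y : {ptws 'I_n.+1 -> G} => (Dm mul inv y : {ptws 'I_n -> G}))
   @` closure [set y | f y != 0])).
- exact: hausdorff_ptws (hausG HG).
- apply: continuous_compact => //; apply: continuous_subspaceT; exact: (cont_D (n:=n) HG).
move=> gs /= hs; exists (chain_point mul g gs); last exact: (D_chain HG).
by apply: subset_closure; apply: (Phi_nz hs).
Qed.

Lemma scale_cancel (a : R) (v : V) : a != 0 -> a%:C *: v = 0 -> v = 0.
Proof.
move=> a0 e.
have nz : a%:C != 0 :> R[i] by rewrite fmorph_eq0.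
by rewrite -[v]scale1r -(mulVf nz) -scalerA e scaler0.
Qed.

Lemma part3a (f : {ptws 'I_n.+1 -> G} -> V) : Cc_infty f -> Tn mul inv mu act f = (fun _ => 0) ->
  exists k (c : 'I_k -> R[i]) (g : 'I_k -> G) (fs : 'I_k -> {ptws 'I_n.+1 -> G} -> V),
    (forall j, Cc_infty (fs j)) /\
    forall x, f x = \sum_(j < k) c j *: (fun_act mul inv act (g j) (fs j) x - fs j x).
Proof.
move=> hf T0.
have [K [C [k [x [b [HK hgrid RK SC TE]]]]]] := Tn_grid hf.
have Z : forall gs, \sum_(j < k) (if b j then Phi f (x j, gs) else 0) = 0.
  move=> gs; apply: (@scale_cancel (fine (mu K))); first exact: (muK_pos Hmu HK).
  have e : \sum_(j < k) m K x b j *: Phi f (x j, gs) = 0.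
    by have := congr1 (fun F => F gs) T0; rewrite /= TE.
  rewrite -[X in _ = X]e scaler_sumr; apply: eq_bigr => j _; rewrite (gU_mass HG Hmu _ _ _ HK).
  by case: (b j) => //; rewrite rmorph0 scale0r scaler0.
pose w j := fun gs : {ptws 'I_n -> G} => if b j then Phi f (x j, gs) else 0.
pose fs j := sec mul inv act K (w j).
exists k, (fun _ => 1), x, fs; split.
  move=> j; apply: (sec_Cc HG HV HK); split.
    by rewrite /w; case: (b j); [exact: Phi_x_lc | exact: loc_const_cst].
  rewrite /w; case: (b j); first exact: Phi_x_supp.
  have -> : [set y : {ptws 'I_n -> G} | (0 : V) != 0] = set0.
    by apply/seteqP; split => y //=; rewrite eqxx.
  by rewrite closure0; apply: compact0.
move=> y.
under eq_bigr do rewrite scale1r.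
rewrite sumrB.
have E1 : \sum_(j < k) fs j y = 0.
  rewrite /fs /sec; case: (pselect (K (y ord0))) => Ky.
    rewrite (asboolT Ky) -(act_sum HV) /w Z; exact: (act0 HV).
  by rewrite (asboolF Ky) big1.
have E2 : forall j, fun_act mul inv act (x j) (fs j) y = act (y ord0)
    (if `[< gU mul inv K x b j (y ord0) >] then Phi f (x j, Dm mul inv y) else 0).
  move=> j; rewrite /fun_act /fs /sec /= (D_L HG) /gU /w.
  case: (b j).
    case: (pselect (K (mul (inv (x j)) (y ord0)))) => Kj.
      by rewrite !asboolT // -(actM HV) (mulKVg HG).
    by rewrite !asboolF // !(act0 HV).
  by rewrite (@asboolF (set0 (y ord0))) // (act0 HV); case: ifP => _; rewrite ?(act0 HV).
rewrite E1 subr0; under eq_bigr do rewrite E2.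
rewrite -(act_sum HV) -(grid_point HG (y ord0) hgrid (RK (Dm mul inv y)) (SC (Dm mul inv y))).
by rewrite /Phi /= (actK HG HV) (chain_D HG).
Qed.


Lemma part3b (f : {ptws 'I_n.+1 -> G} -> V) :
  (exists k (c : 'I_k -> R[i]) (g : 'I_k -> G) (fs : 'I_k -> {ptws 'I_n.+1 -> G} -> V),
    (forall j, Cc_infty (fs j)) /\
    forall x, f x = \sum_(j < k) c j *: (fun_act mul inv act (g j) (fs j) x - fs j x)) ->
  Tn mul inv mu act f = (fun _ => 0).
Proof.
move=> [k [c [g [fs [hfs hf]]]]].
apply: funext => gs.
have hg : forall j, exists KC : set G * set G, [/\ compact_open_subgroup mul inv one KC.1,
    compact KC.2, (forall gs, rinv mul KC.1 (fun h => Phi (fs j) (h, gs))) &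
    (forall gs h, Phi (fs j) (h, gs) != 0 -> KC.2 h)].
  by move=> j; have [K [C H]] := Phi_good (hfs j); exists (K, C).
have [KC hKC] := choice hg.
have nI := @filter_forall _ 'I_k (fun j z => (KC j).1 z) (nbhs one) (nbhs_filter one)
  (fun j => let: And4 HK _ _ _ := hKC j in Knbhs HK).
have [K [HK KI]] := basisG HG nI.
pose C := \big[setU/set0]_(j < k) ((KC j).2 `|` [set mul (g j) h | h in (KC j).2]).
have cC : compact C.
  apply: bigsetU_compact => j _; case: (hKC j) => _ cj _ _.
  apply: compactU => //; apply: continuous_compact => //; apply: continuous_subspaceT.
  by apply: (cont_mul2 HG); [apply: cont_cst'|apply: cont_id'].
pose A j h := Phi (fs j) (mul (inv (g j)) h, gs).
pose B j h := Phi (fs j) (h, gs).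
have RA : forall j, rinv mul K (A j).
  move=> j h kk Kk; rewrite /A (mulA HG); case: (hKC j) => _ _ RK _.
  exact: (RK gs (mul (inv (g j)) h) kk (KI kk Kk j)).
have RB : forall j, rinv mul K (B j).
  move=> j h kk Kk; rewrite /B; case: (hKC j) => _ _ RK _.
  exact: (RK gs h kk (KI kk Kk j)).
have SA : forall j h, A j h != 0 -> C h.
  move=> j h hA; apply/in_bigsetU_ord; exists j; right.
  case: (hKC j) => _ _ _ SK; exists (mul (inv (g j)) h); first exact: SK hA.
  exact: (mulKVg HG).
have SB : forall j h, B j h != 0 -> C h.
  move=> j h hB; apply/in_bigsetU_ord; exists j; left.
  by case: (hKC j) => _ _ _ SK; apply: SK hB.
have JE : forall h, Phi f (h, gs) = \sum_(j < k) c j *: (A j h - B j h).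
  move=> h; rewrite /Phi hf (act_sum HV); apply: eq_bigr => j _.
  rewrite (actZ HV) (actB HV) /A /B /Phi /fun_act /=.
  by rewrite (chainL HG) (invM HG) (invK HG) (actM HV).
have RJ : rinv mul K (fun h => Phi f (h, gs)).
  by move=> h kk Kk; rewrite !JE; apply: eq_bigr => j _; rewrite (RA j h kk Kk) (RB j h kk Kk).
have SJ : forall h, Phi f (h, gs) != 0 -> C h.
  move=> h hJ; apply: contrapT => nC; move/eqP: hJ; apply; rewrite JE big1 // => j _.
  have ZA : A j h = 0 by apply/eqP; apply: contraT => /SA.
  have ZB : B j h = 0 by apply/eqP; apply: contraT => /SB.
  by rewrite ZA ZB subrr scaler0.
have [kx [x [b hgrid]]] := grid_exists HG HK cC.
have EAB : forall j, \sum_(u < kx) m K x b u *: A j (x u) = \sum_(u < kx) m K x b u *: B j (x u).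
  move=> j; apply: (lc_unique HG Hmu (h := A j)).
    exact: (grid_integral HG mu HK hgrid (RA j) (SA j)).
  exact: (lc_translate HG Hmu (g j) (grid_integral HG mu HK hgrid (RB j) (SB j))).
have -> : Tn mul inv mu act f gs = \sum_(u < kx) m K x b u *: Phi f (x u, gs).
  exact: (lc_integralE HG Hmu (grid_integral HG mu HK hgrid RJ SJ)).
under eq_bigr => u _ do rewrite JE scaler_sumr.
rewrite exchange_big big1 // => j _.
under eq_bigr => u _ do rewrite scalerA mulrC -scalerA scalerBr.
by rewrite -scaler_sumr sumrB EAB subrr scaler0.
Qed.

End Main.

Close Scope complex_scope.
Unset Implicit Arguments.
Set Strict Implicit.

Theorem mainTheorem14 (R : realType) (G : ptopologicalType)
  (mul : G -> G -> G) (inv : G -> G) (one : G)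
  (HG : is_lgroup mul inv one)
  (mu : {measure set (borel G) -> \bar R})
  (Hmu : is_left_haar mul mu)
  (V : lmodType R[i]) (act : G -> V -> V)
  (HV : is_smooth_module mul inv one act)
  (n : nat) (Hn : (1 <= n)%N) :
  [/\ (* T_n maps C_c^infty(G^{n+1},V) into C_c^infty(G^n,V) *)
      (forall f : {ptws 'I_n.+1 -> G} -> V,
         Cc_infty f -> Cc_infty (Tn mul inv mu act f)),
      (* T_n is surjective *)
      (forall h : {ptws 'I_n -> G} -> V, Cc_infty h ->
         exists f : {ptws 'I_n.+1 -> G} -> V, Cc_infty f /\ Tn mul inv mu act f = h)
    & (* ker T_n = span { g.f - f } *)
      (forall f : {ptws 'I_n.+1 -> G} -> V, Cc_infty f ->
         (Tn mul inv mu act f = (fun _ => 0) <->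
          exists k (c : 'I_k -> R[i]) (g : 'I_k -> G)
                   (fs : 'I_k -> {ptws 'I_n.+1 -> G} -> V),
            (forall j, Cc_infty (fs j)) /\
            forall x, f x = \sum_(j < k)
                c j *: (fun_act mul inv act (g j) (fs j) x - fs j x)))].
Proof.
split.
- by move=> f hf; apply: (part1 HG Hmu HV).
- by move=> h hh; apply: (part2 HG Hmu HV).
- move=> f hf; split.
    by move=> T0; apply: (part3a HG Hmu HV hf T0).
  by move=> H; apply: (part3b HG Hmu HV H).
Qed.
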